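(* Let $V_{th_1}>0$ (the first-level firing threshold) and $a>0$ (the width of the rectangular surrogate derivative, whose gradient-available interval is $[V_{th_1}-a/2,\,V_{th_1}+a/2]$). Let the value $x$ of a feature map entry normalized by tdBN satisfy $x \sim N(0,(V_{th_1})^2)$. Let $P$ and $P^*$ be the probabilities that a spike (of value $1$) arriving from the shortcut connection leads to a dormant unit in spiking ResNet and spiking DS-ResNet respectively, and let $I$ and $I^*$ be the identity-mapping abilities of spiking ResNet and spiking DS-ResNet respectively (all as defined in the context). Then $P^* < P$ and $I^* > I$.
   Context: Setting (single-level firing, $K=1$): a spiking neuron fires when its membrane potential reaches the threshold $V_{th_1}$; its spike derivative is approximated by $h(u)=\frac{1}{a}\mathbf{1}\{|u-V_{th_1}|<a/2\}$. A ''dormant unit'' is a neuron whose membrane potential lies to the right of the gradient-available interval, i.e. exceeds $V_{th_1}+a/2$, so that its surrogate derivative is zero. The residual-branch feature map value $x$ and the shortcut spike are treated as independent, and residual membrane potential from earlier timesteps is ignored. In spiking ResNet the activation is applied after adding the shortcut spike to the residual branch, so the pre-activation value is $1+x$ when a shortcut spike is present; in spiking DS-ResNet the activation is applied to the residual branch before the addition, so the pre-activation value is $x$. Accordingly, $P=\Pr(1+x>V_{th_1}+a/2)$ and $P^*=\Pr(x>V_{th_1}+a/2)$. Identity-mapping ability is measured as the probability that the block's output reflects whether a shortcut spike is present: for spiking ResNet the output (spike iff $\text{shortcut}+x\ge V_{th_1}$) depends on the shortcut spike exactly when $V_{th_1}-1<x<V_{th_1}$, so $I=\Pr(V_{th_1}-1<x<V_{th_1})$;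 for spiking DS-ResNet the shortcut spike is added directly to the output, so every input spike is mapped to the output and $I^*=1$. *)

(* Defs.v *)
From HB Require Import structures.
From mathcomp Require Import all_boot all_order all_algebra.
From mathcomp Require Import all_classical all_reals all_analysis.
Set Implicit Arguments. Unset Strict Implicit. Unset Printing Implicit Defensive.
Import Order.TTheory GRing.Theory Num.Theory.
Local Open Scope classical_set_scope.
Local Open Scope ring_scope.

(* x ~ N(0, Vth^2): law of x is normal_prob 0 Vth (mean 0, std. dev. Vth). *)

Definition P_resnet {R : realType} (Vth a : R) : \bar R :=
  normal_prob 0 Vth [set x : R | Vth + a / 2 < 1 + x].

Definition P_dsresnet {R : realType} (Vth a : R) : \bar R :=
  normal_prob 0 Vth [set x : R | Vth + a / 2 < x].

Definition I_resnet {R : realType} (Vth : R) : \bar R :=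
  normal_prob 0 Vth [set x : R | Vth - 1 < x < Vth].

Definition I_dsresnet {R : realType} (Vth : R) : \bar R := 1%E.

(* Main.v *)
Require Import Defs.
From HB Require Import structures.
From mathcomp Require Import all_boot all_order all_algebra.
From mathcomp Require Import all_classical all_reals all_analysis.
From mathcomp Require Import lra measurable_realfun.
Import Order.TTheory GRing.Theory Num.Theory.
Local Open Scope classical_set_scope.
Local Open Scope ring_scope.

Lemma sq_bound (R : realType) (b c x : R) : b <= x -> x <= c -> x ^+ 2 <= b ^+ 2 + c ^+ 2.
Proof.
move=> hb hc; have [x0|x0] := leP 0 x.
- have : x ^+ 2 <= c ^+ 2 by rewrite ler_sqr ?nnegrE //; lra.
  have := sqr_ge0 b; lra.
- have : x ^+ 2 <= b ^+ 2.
    by rewrite -(sqrrN x) -(sqrrN b) ler_sqr ?nnegrE; lra.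
  have := sqr_ge0 c; lra.
Qed.

Lemma normal_pos (R : realType) (s b c : R) : 0 < s -> b < c ->
  (0 < normal_prob 0 s `[b, c])%E.
Proof.
move=> s0 bc.
pose k := normal_peak s * expR (- (b ^+ 2 + c ^+ 2) / (s ^+ 2 *+ 2)).
have k0 : 0 < k by rewrite /k mulr_gt0 ?expR_gt0 ?normal_peak_gt0 ?gt_eqF.
apply: (@lt_le_trans _ _ (\int[lebesgue_measure]_(x in `[b, c]) (cst k%:E) x)%E).
  rewrite integral_cst // /= lebesgue_measure_itv /= lte_fin bc.
  by rewrite -EFinD -EFinM lte_fin mulr_gt0 // subr_gt0.
apply: ge0_le_integral => //.
- by move=> x _; rewrite lee_fin ltW.
- apply/measurable_EFinP; apply: measurable_funTS; exact: measurable_normal_pdf.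
move=> x /=; rewrite /= in_itv /= => /andP [hb hc].
rewrite lee_fin /normal_pdf gt_eqF //= /k ler_pM2l ?normal_peak_gt0 ?gt_eqF //.
rewrite /normal_fun ler_expR subr0 !mulNr lerN2 ler_pM2r ?invr_gt0 ?pmulrn_lgt0 ?exprn_even_gt0 //.
  exact: sq_bound.
by apply/orP; right; rewrite gt_eqF.
Qed.

Lemma fin_np (R : realType) (s : R) (A : set R) : measurable A ->
  normal_prob 0 s A \is a fin_num.
Proof.
move=> mA; rewrite ge0_fin_numE ?measure_ge0 //.
apply: (le_lt_trans (probability_le1 (normal_prob 0 s) mA)); exact: ltey.
Qed.

Theorem theorem1 (R : realType) (Vth a : R) (hV : 0 < Vth) (ha : 0 < a) :
  (P_dsresnet Vth a < P_resnet Vth a)%E /\ (I_resnet Vth < I_dsresnet Vth)%E.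
Proof.
split.
- rewrite /P_dsresnet /P_resnet; set c := Vth + a / 2.
  have e1 : [set x : R | c < 1 + x] = (`]c - 1, c] `|` `]c, +oo[)%classic.
    apply/seteqP; split => x /=; rewrite !in_itv /= ?andbT.
      by move=> h; have [xc|xc] := leP x c; [left; apply/andP; split => //; lra | right].
    by case=> [/andP [h _]|h]; lra.
  have e2 : [set x : R | c < x] = (`]c, +oo[)%classic.
    by apply/seteqP; split => x /=; rewrite !in_itv /= ?andbT.
  rewrite e1 e2 measureU //; last first.
    apply/seteqP; split => x //=; rewrite !in_itv /= ?andbT => -[/andP [_ h1] h2]; lra.
  rewrite lteDr; last exact: fin_np.
  apply: (@lt_le_trans _ _ (normal_prob 0 Vth `[c - 1 / 2, c]%classic)).
    by apply: normal_pos => //; lra.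
  apply: le_measure; rewrite ?inE //.
  by move=> x /=; rewrite !in_itv /= => /andP [h1 h2]; apply/andP; split => //; lra.
- rewrite /I_resnet /I_dsresnet.
  have e : [set x : R | Vth - 1 < x < Vth] = (`]Vth - 1, Vth[)%classic.
    by apply/seteqP; split => x /=; rewrite !in_itv.
  rewrite e.
  have hK : (0 < normal_prob 0 Vth `[Vth, (Vth + 1)%R]%classic)%E.
    by apply: normal_pos => //; lra.
  have := probability_le1 (normal_prob 0 Vth) (measurableU _ _ (measurable_itv `]Vth - 1, Vth[) (measurable_itv `[Vth, Vth + 1])).
  rewrite measureU //; last first.
    apply/seteqP; split => x //=; rewrite !in_itv /= => -[/andP [_ h1] /andP [h2 _]]; lra.
  apply: lt_le_trans.
  by rewrite lteDl //; exact: fin_np.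
Qed.
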